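(* For a model class $\mathcal M$ and $\bar M\in\mathcal M^+$ define $$\widetilde{\mathrm{dec}}_\varepsilon(\mathcal M,\bar M)=\inf_{p,q\in\Delta(\Pi)}\sup_{M\in\mathcal H_{p,\varepsilon}(\bar M)\cap\mathcal H_{q,\varepsilon}(\bar M)}\mathbb E_{\pi\sim p}[g^M(\pi)],$$ with value $0$ when $\mathcal H_{p,\varepsilon}(\bar M)\cap\mathcal H_{q,\varepsilon}(\bar M)=\emptyset$. Then for all $\bar M\in\mathcal M^+$ and $\varepsilon>0$, $$\widetilde{\mathrm{dec}}_\varepsilon(\mathcal M,\bar M)\le\mathrm{dec}^{\mathrm c}_{\mathrm{pac},\varepsilon}(\mathcal M,\bar M)\le\widetilde{\mathrm{dec}}_{\sqrt2\varepsilon}(\mathcal M,\bar M).$$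
   Context: Models are kernels $M:\Pi\to\Delta([0,1]\times\mathcal O)$ (rewards in $[0,1]$); $\mathcal M^+$ is the set of all models. $f^M(\pi)=\mathbb E_{(r,o)\sim M(\pi)}[r]$, $\pi_M\in\arg\max f^M$, $g^M(\pi)=f^M(\pi_M)-f^M(\pi)$; $D^2_H$ is squared Hellinger distance. $\mathcal H_{p,\varepsilon}(\bar M)=\{M\in\mathcal M:\mathbb E_{\pi\sim p}[D^2_H(M(\pi),\bar M(\pi))]\le\varepsilon^2\}$. Constrained PAC DEC: $\mathrm{dec}^{\mathrm c}_{\mathrm{pac},\varepsilon}(\mathcal M,\bar M)=\inf_{p,q\in\Delta(\Pi)}\sup_{M\in\mathcal H_{q,\varepsilon}(\bar M)}\mathbb E_{\pi\sim p}[g^M(\pi)]$ (value $0$ if the set is empty). *)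

(* Defs.v *)
From HB Require Import structures.
From mathcomp Require Import all_boot all_order all_algebra.
From mathcomp Require Import all_classical all_reals all_analysis.
Set Implicit Arguments. Unset Strict Implicit. Unset Printing Implicit Defensive.
Import Order.TTheory GRing.Theory Num.Theory.
Import numFieldNormedType.Exports.
Local Open Scope classical_set_scope.
Local Open Scope ring_scope.
Local Open Scope ereal_scope.

Section DEC.
Context {R : realType} {d d' : measure_display}
  (Pi : measurableType d) (O : measurableType d').

(* Outcome space: (reward, observation) in R * O; models are probability
   kernels Pi ~> R * O whose reward lies in [0,1] almost surely. *)
Definition kern := R.-pker Pi ~> (R * O)%type.

Definition is_model (M : kern) : Prop :=
  forall x : Pi, M x ([set r : R | (0 <= r <= 1)%R] `*` [set: O]) = 1.

(* Squared Hellinger distance (general measure-theoretic form, Le Cam):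
   supremum over finite measurable partitions (A_i) of T of
   sum_i (sqrt P(A_i) - sqrt Q(A_i))^2 .  No 1/2 normalisation. *)
Definition is_fin_partition {dT} {T : measurableType dT} (s : seq (set T)) :=
  [/\ forall A, A \in s -> measurable A,
      forall i j, (i < size s)%N -> (j < size s)%N -> i <> j ->
         nth set0 s i `&` nth set0 s j = set0
    & \big[setU/set0]_(A <- s) A = [set: T]].

Definition D2H {dT} {T : measurableType dT}
    (P Q : {measure set T -> \bar R}) : \bar R :=
  ereal_sup [set (\sum_(A <- s)
      (Num.sqrt (fine (P A)) - Num.sqrt (fine (Q A))) ^+ 2)%:E
    | s in @is_fin_partition dT T].

Definition fM (M : kern) (x : Pi) : \bar R := \int[M x]_z (z.1)%:E.

(* g^M(pi) = f^M(pi_M) - f^M(pi), with f^M(pi_M) = max f^M = sup f^M *)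
Definition gM (M : kern) (x : Pi) : \bar R := ereal_sup (range (fM M)) - fM M x.

Definition Hball (Mcls : set kern) (Mbar : kern) (p : probability Pi R)
    (eps : R) : set kern :=
  [set M | Mcls M /\ \int[p]_x D2H (M x) (Mbar x) <= (eps ^+ 2)%:E].

Definition sup0 (H : set kern) (F : kern -> \bar R) : \bar R :=
  if pselect (H = set0) then 0 else ereal_sup (F @` H).

Definition dec_c (Mcls : set kern) (Mbar : kern) (eps : R) : \bar R :=
  ereal_inf [set v | exists p q : probability Pi R,
    v = sup0 (Hball Mcls Mbar q eps) (fun M => \int[p]_x gM M x)].

Definition dec_tilde (Mcls : set kern) (Mbar : kern) (eps : R) : \bar R :=
  ereal_inf [set v | exists p q : probability Pi R,
    v = sup0 (Hball Mcls Mbar p eps `&` Hball Mcls Mbar q eps)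
             (fun M => \int[p]_x gM M x)].

End DEC.

(* Main.v *)
Require Import Defs.
From HB Require Import structures.
From mathcomp Require Import all_boot all_order all_algebra.
From mathcomp Require Import all_classical all_reals all_analysis.
From mathcomp Require Import measurable_realfun.
Import Order.TTheory GRing.Theory Num.Theory.
Local Open Scope classical_set_scope.
Local Open Scope ring_scope.

Section Mix.
Local Open Scope ereal_scope.
Context {R : realType} {d : measure_display} {T : measurableType d}.
Variables (p q : probability T R).

Definition mixm (A : set T) : \bar R := (2^-1)%:E * (p A + q A).

Let mixm0 : mixm set0 = 0.
Proof. by rewrite /mixm !measure0 adde0 mule0. Qed.

Let mixm_ge0 A : 0 <= mixm A.
Proof. by rewrite /mixm mule_ge0 // ?lee_fin ?invr_ge0 // adde_ge0. Qed.

Let half_ge0 : (0 <= 2^-1 :> R)%R.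
Proof. by rewrite invr_ge0. Qed.

Let mixm_sa : semi_sigma_additive mixm.
Proof.
have -> : mixm = mscale (NngNum half_ge0) (measure_add p q).
  by apply/funext => A; rewrite /mixm /mscale /= /msum 2!big_ord_recl big_ord0 adde0.
exact: measure_semi_sigma_additive.
Qed.

HB.instance Definition _ := isMeasure.Build _ _ _ mixm mixm0 mixm_ge0 mixm_sa.

Let mixm_setT : mixm [set: T] = 1.
Proof.
rewrite /mixm !probability_setT -EFinD -EFinM; congr EFin.
by rewrite mulVf.
Qed.

HB.instance Definition _ := @Measure_isProbability.Build _ _ R mixm mixm_setT.

End Mix.

Section MixInt.
Local Open Scope ereal_scope.
Context {R : realType} {d : measure_display} (T : measurableType d).
Variables (p q : probability T R).
Import HBNNSimple.

Lemma sint_mix (h : {nnsfun T >-> R}) :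
  sintegral p h <= 2%:E * sintegral (mixm p q) h.
Proof.
rewrite !sintegralE !fsbig_finite //.
rewrite big_seq [X in _ <= _ * X]big_seq ge0_sume_distrr; last first.
  move=> i; rewrite in_fset_set // inE => -[t _ <-].
  by rewrite mule_ge0 // lee_fin.
apply: lee_sum => i; rewrite in_fset_set // inE => -[t _ <-].
rewrite /= /mixm muleCA [2%:E * _]muleA -EFinM mulfV ?pnatr_eq0 // mul1e.
by apply: lee_wpmul2l; rewrite ?lee_fin // leeDl.
Qed.

Lemma sint_mixr (h : {nnsfun T >-> R}) :
  sintegral q h <= 2%:E * sintegral (mixm p q) h.
Proof.
rewrite !sintegralE !fsbig_finite //.
rewrite big_seq [X in _ <= _ * X]big_seq ge0_sume_distrr; last first.
  move=> i; rewrite in_fset_set // inE => -[t _ <-].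
  by rewrite mule_ge0 // lee_fin.
apply: lee_sum => i; rewrite in_fset_set // inE => -[t _ <-].
rewrite /= /mixm muleCA [2%:E * _]muleA -EFinM mulfV ?pnatr_eq0 // mul1e.
by apply: lee_wpmul2l; rewrite ?lee_fin // leeDr.
Qed.

Lemma int_mixr (f : T -> \bar R) : (forall x, 0 <= f x) ->
  \int[q]_x f x <= 2%:E * \int[mixm p q]_x f x.
Proof.
move=> f0.
rewrite ge0_integralE// [X in _ <= _ * X]ge0_integralE//.
apply: ge_ereal_sup => _ [h hf <-].
apply: le_trans (sint_mixr h) _.
apply: lee_wpmul2l; first by rewrite lee_fin.
by apply: ereal_sup_ubound; exists h.
Qed.

Lemma int_mix (f : T -> \bar R) : (forall x, 0 <= f x) ->
  \int[p]_x f x <= 2%:E * \int[mixm p q]_x f x.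
Proof.
move=> f0.
rewrite ge0_integralE// [X in _ <= _ * X]ge0_integralE//.
apply: ge_ereal_sup => _ [h hf <-].
apply: le_trans (sint_mix h) _.
apply: lee_wpmul2l; first by rewrite lee_fin.
by apply: ereal_sup_ubound; exists h.
Qed.

End MixInt.

Section FM.
Local Open Scope ereal_scope.
Context {R : realType} {d d' : measure_display}
  (Pi : measurableType d) (O : measurableType d').

Lemma fM_fin (M : @kern R d d' Pi O) (x : Pi) : is_model M ->
  fM M x \is a fin_num.
Proof.
move=> hM.
pose A := [set r : R | (0 <= r <= 1)%R] `*` [set: O].
have mA : measurable A.
  apply: measurableX => //.
  have -> : [set r : R | (0 <= r <= 1)%R] = `[0%R, 1%R]%classic.
    by apply/seteqP; split => r; rewrite /= in_itv.
  exact: measurable_itv.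
have nA : M x (~` A) = 0.
  have hT : M x [set: R * O] = 1 by exact: prob_kernel.
  rewrite -setTD measureD //; last first.
    have h1 : M x [set: R * O] < +oo by rewrite hT ltry.
    exact: h1.
  change (M x [set: R * O] - M x ([set: R * O] `&` A) = 0).
  by rewrite setTI hM hT subee.
have bnd (g : R * O -> \bar R) : (forall z, 0 <= g z) -> measurable_fun setT g ->
    (forall z, A z -> g z <= 1) -> \int[M x]_z g z <= 1.
  move=> g0 mg gA.
  apply: (@le_trans _ _ (\int[M x]_z (cst 1 z))).
    apply: ae_ge0_le_integral => //.
    exists (~` A); split; [exact: measurableC | exact: nA |].
    move=> z /= nz Az; apply: nz => _; exact: gA.
  by rewrite integral_cst // mul1e prob_kernel.
have mf : measurable_fun setT (fun z : R * O => (z.1)%:E).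
  by apply/measurable_EFinP; exact: measurable_fst.
rewrite /fM integralE fin_numB; apply/andP; split.
- rewrite ge0_fin_numE; last by apply: integral_ge0 => z _; exact: funepos_ge0.
  apply: (le_lt_trans _ (ltry 1%R)); apply: bnd.
  + by move=> z; exact: funepos_ge0.
  + exact: measurable_funepos.
  + move=> [r o] [/= /andP[r0 r1] _]; rewrite funeposE.
    by rewrite ge_max lee_fin r1 lee01.
- rewrite ge0_fin_numE; last by apply: integral_ge0 => z _; exact: funeneg_ge0.
  apply: (le_lt_trans _ (ltry 1%R)); apply: bnd.
  + by move=> z; exact: funeneg_ge0.
  + exact: measurable_funeneg.
  + move=> [r o] [/= /andP[r0 r1] _]; rewrite funenegE.
    by rewrite ge_max lee01 andbT /= lee_fin (le_trans _ ler01) // oppr_le0.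
Qed.

End FM.

Lemma D2H_ge0 (R : realType) dT (T : measurableType dT)
  (P Q : {measure set T -> \bar R}) : (0 <= D2H P Q)%E.
Proof.
apply: (le_trans _ (ereal_sup_ubound _)); last first.
  exists [:: setT]; last reflexivity.
  split.
  - by move=> A; rewrite inE => /eqP ->.
  - by move=> [|i] [|j].
  - by rewrite big_cons big_nil setU0.
by rewrite lee_fin big_cons big_nil addr0 sqr_ge0.
Qed.

Lemma gM_ge0 (R : realType) (d d' : measure_display)
    (Pi : measurableType d) (O : measurableType d')
    (M : @kern R d d' Pi O) x : is_model M -> (0 <= gM M x)%E.
Proof.
move=> hM; rewrite /gM sube_ge0; last by rewrite fM_fin.
by apply: ereal_sup_ubound; exists x.
Qed.

Lemma sup0_le (R : realType) (d d' : measure_display)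
    (Pi : measurableType d) (O : measurableType d')
    (H1 H2 : set (@kern R d d' Pi O)) (F : @kern R d d' Pi O -> \bar R) :
  H1 `<=` H2 -> (forall M, H2 M -> (0 <= F M)%E) -> (Defs.sup0 H1 F <= Defs.sup0 H2 F)%E.
Proof.
move=> H12 F0; rewrite /Defs.sup0.
case: pselect => [h1|h1]; case: pselect => [h2|h2] //.
- have /set0P [M HM] : H2 != set0 by apply/eqP.
  by apply: le_trans (F0 M HM) _; apply: ereal_sup_ubound; exists M.
- by exfalso; apply: h1; rewrite -subset0 -h2.
- by apply: le_ereal_sup; apply: image_subset.
Qed.

Theorem lemmaD3 (R : realType) (d d' : measure_display)
    (Pi : measurableType d) (O : measurableType d')
    (Mcls : set (@kern R d d' Pi O)) (Mbar : @kern R d d' Pi O)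
    (hMcls : forall M, Mcls M -> is_model M) (hMbar : is_model Mbar)
    (eps : R) (heps : 0 < eps) :
  (dec_tilde Mcls Mbar eps <= dec_c Mcls Mbar eps)%E /\
  (dec_c Mcls Mbar eps <= dec_tilde Mcls Mbar (Num.sqrt 2 * eps))%E.
Proof.
have F0 (p : probability Pi R) (H : set (@kern R d d' Pi O)) :
    H `<=` Mcls -> forall M, H M -> (0 <= \int[p]_x gM M x)%E.
  move=> HM M /HM cM; apply: integral_ge0 => x _.
  exact: gM_ge0 (hMcls _ cM).
split.
- apply: le_ereal_inf_tmp => _ [p [q ->]].
  have h1 : (dec_tilde Mcls Mbar eps <= Defs.sup0 (Hball Mcls Mbar p eps `&` Hball Mcls Mbar q eps)
                        (fun M => \int[p]_x gM M x))%E.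
    by apply: ereal_inf_lbound; exists p, q.
  apply: (le_trans h1).
  apply: sup0_le; first exact: subIsetr.
  by apply: F0 => M [].
- apply: le_ereal_inf_tmp => _ [p [q ->]].
  have h1 : (dec_c Mcls Mbar eps <= Defs.sup0 (Hball Mcls Mbar (mixm p q) eps)
                        (fun M => \int[p]_x gM M x))%E.
    by apply: ereal_inf_lbound; exists p, (mixm p q).
  apply: (le_trans h1).
  apply: sup0_le; last by apply: F0 => M [[]].
  have E : (2%:E * (eps ^+ 2)%:E = ((Num.sqrt 2 * eps) ^+ 2)%:E)%E.
    by rewrite -EFinM exprMn sqr_sqrtr.
  have D0 (M : @kern R d d' Pi O) x : (0 <= D2H (M x) (Mbar x))%E.
    exact: D2H_ge0.
  move=> M [cM hM]; split; split => //; rewrite -E.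
  + apply: le_trans (@int_mix _ _ _ p q _ (D0 M)) _.
    by apply: lee_wpmul2l => //; rewrite lee_fin.
  + apply: le_trans (@int_mixr _ _ _ p q _ (D0 M)) _.
    by apply: lee_wpmul2l => //; rewrite lee_fin.
Qed.
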